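(* Let $x,z\in\mathbb{R}^n$ be nonzero with $xx^T\neq zz^T$. Define $\theta\in[0,\pi/2]$ by $$\cos\theta=\max_{y\in\mathbb{R}^n,\ \mathbf{X}y\neq0}\frac{e^T\mathbf{X}y}{\|e\|\,\|\mathbf{X}y\|}.$$ Then $$\sin\theta=\frac{(\|z\|\sin\phi)^2}{\|e\|}=\frac{\sin^2\phi}{\sqrt{(\rho^2-1)^2+2\rho^2\sin^2\phi}}.$$
   Context: $\rho=\|x\|/\|z\|$ and $\phi=\arccos\big(x^Tz/(\|x\|\|z\|)\big)\in[0,\pi]$. $\mathrm{vec}$ is column-stacking vectorization; $e=\mathrm{vec}(xx^T-zz^T)\in\mathbb{R}^{n^2}$ (so $\|e\|=\|xx^T-zz^T\|_F$), and $\mathbf{X}\in\mathbb{R}^{n^2\times n}$ is the matrix with $\mathbf{X}u=\mathrm{vec}(xu^T+ux^T)$ for all $u\in\mathbb{R}^n$. *)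

(* Defs.v *)
From Stdlib Require Import Reals Lra.
Open Scope R_scope.

(* Vectors in R^n are modelled as functions nat -> R; only indices < n matter. *)
Fixpoint rsum (n : nat) (f : nat -> R) : R :=
  match n with
  | O => 0
  | S m => rsum m f + f m
  end.

Definition dot (n : nat) (u v : nat -> R) : R := rsum n (fun i => u i * v i).
Definition norm (n : nat) (u : nat -> R) : R := sqrt (dot n u u).

Definition vzero (n : nat) (u : nat -> R) : Prop := forall i, (i < n)%nat -> u i = 0.

(* n x n matrices as functions nat -> nat -> R (row i, column j). *)
(* Column-stacking vectorization: entry (i,j) goes to index i + n*j. *)
Definition vec (n : nat) (M : nat -> nat -> R) : nat -> R :=
  fun k => M (k mod n)%nat (k / n)%nat.

Definition outer (u v : nat -> R) : nat -> nat -> R := fun i j => u i * v j.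

Definition evec (n : nat) (x z : nat -> R) : nat -> R :=
  vec n (fun i j => outer x x i j - outer z z i j).

Definition Xop (n : nat) (x u : nat -> R) : nat -> R :=
  vec n (fun i j => outer x u i j + outer u x i j).

Definition is_max {A : Type} (P : A -> Prop) (f : A -> R) (m : R) : Prop :=
  (exists y, P y /\ f y = m) /\ (forall y, P y -> f y <= m).

Definition ratio (n : nat) (x z y : nat -> R) : R :=
  dot (n * n) (evec n x z) (Xop n x y) /
    (norm (n * n) (evec n x z) * norm (n * n) (Xop n x y)).

Definition rho (n : nat) (x z : nat -> R) : R := norm n x / norm n z.
Definition phi (n : nat) (x z : nat -> R) : R :=
  acos (dot n x z / (norm n x * norm n z)).

(* Main.v *)
Require Import Defs.
From Stdlib Require Import Reals Lra Lia Psatz FunctionalExtensionality.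
Open Scope R_scope.

Lemma rsum_ext N f g : (forall i, (i < N)%nat -> f i = g i) -> rsum N f = rsum N g.
Proof. induction N; simpl; intros H; auto. rewrite IHN by (intros; apply H; lia). rewrite H by lia. auto. Qed.

Lemma rsum_lin N a b f g : rsum N (fun k => a * f k + b * g k) = a * rsum N f + b * rsum N g.
Proof. induction N; simpl. ring. rewrite IHN. ring. Qed.

Lemma rsum_scal N a f : rsum N (fun k => a * f k) = a * rsum N f.
Proof. induction N; simpl. ring. rewrite IHN. ring. Qed.

Lemma rsum_split a b f : rsum (a + b) f = rsum a f + rsum b (fun i => f (a + i)%nat).
Proof. induction b; simpl. rewrite Nat.add_0_r. ring. rewrite Nat.add_succ_r. simpl. rewrite IHb. ring. Qed.

Lemma rsum_nonneg N f : (forall i, (i < N)%nat -> 0 <= f i) -> 0 <= rsum N f.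
Proof. induction N; simpl; intros H. lra. assert (0 <= f N) by (apply H; lia).
 assert (0 <= rsum N f) by (apply IHN; intros; apply H; lia). lra. Qed.

Lemma dot_pos N u : ~ vzero N u -> 0 < dot N u u.
Proof. unfold dot, vzero. induction N; simpl; intros H. exfalso; apply H; intros; lia.
 destruct (Req_dec (u N) 0) as [E|E].
 - assert (0 < rsum N (fun i => u i * u i)). apply IHN. intros H2. apply H. intros i Hi.
   destruct (Nat.eq_dec i N). subst; auto. apply H2; lia. nra.
 - assert (0 <= rsum N (fun i => u i * u i)) by (apply rsum_nonneg; intros; nra).
   assert (0 < u N * u N) by (apply Rsqr_pos_lt in E; unfold Rsqr in E; lra). lra. Qed.

Lemma dot_nonneg N u : 0 <= dot N u u.
Proof. apply rsum_nonneg; intros; nra. Qed.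

Lemma dot_sym N u v : dot N u v = dot N v u.
Proof. apply rsum_ext; intros; ring. Qed.

Lemma dot_lin_l N a b f g h : dot N (fun k => a * f k + b * g k) h = a * dot N f h + b * dot N g h.
Proof. unfold dot. rewrite <- rsum_lin. apply rsum_ext; intros; ring. Qed.

Lemma dot_add_l N f g h : dot N (fun k => f k + g k) h = dot N f h + dot N g h.
Proof. rewrite <- (Rmult_1_l (dot N f h)), <- (Rmult_1_l (dot N g h)), <- dot_lin_l.
 apply rsum_ext; intros; ring. Qed.
Lemma dot_sub_l N f g h : dot N (fun k => f k - g k) h = dot N f h - dot N g h.
Proof. replace (dot N f h - dot N g h) with (1 * dot N f h + (-1) * dot N g h) by ring.
 rewrite <- dot_lin_l. apply rsum_ext; intros; ring. Qed.
Lemma dot_add_r N f g h : dot N h (fun k => f k + g k) = dot N h f + dot N h g.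
Proof. rewrite dot_sym, dot_add_l, (dot_sym N f), (dot_sym N g). auto. Qed.
Lemma dot_sub_r N f g h : dot N h (fun k => f k - g k) = dot N h f - dot N h g.
Proof. rewrite dot_sym, dot_sub_l, (dot_sym N f), (dot_sym N g). auto. Qed.
Lemma dot_ext N f f' g g' : (forall k, f k = f' k) -> (forall k, g k = g' k) -> dot N f g = dot N f' g'.
Proof. intros. apply rsum_ext; intros. rewrite H, H0; auto. Qed.

Lemma CS N u v : dot N u v ^ 2 <= dot N u u * dot N v v.
Proof.
 assert (Q : forall t, 0 <= dot N u u + 2 * t * dot N u v + t ^ 2 * dot N v v).
 { intro t. replace (dot N u u + 2 * t * dot N u v + t ^ 2 * dot N v v)
     with (dot N (fun k => 1 * u k + t * v k) (fun k => 1 * u k + t * v k)).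
   apply dot_nonneg. unfold dot.
   transitivity (rsum N (fun k => 1 * (u k * u k) + t * (2 * (u k * v k) + t * (v k * v k)))).
   apply rsum_ext; intros; ring. rewrite rsum_lin, (rsum_lin N 2 t). ring. }
 set (A := dot N u v) in *. set (B := dot N v v) in *. set (C := dot N u u) in *.
 assert (0 <= B) by apply dot_nonneg.
 destruct (Req_dec B 0) as [HB|HB].
 - destruct (Req_dec A 0) as [HA|HA]. rewrite HA, HB. nra.
   specialize (Q (-(C+1)/(2*A))). rewrite HB in Q.
   replace (C + 2 * (- (C + 1) / (2 * A)) * A + (- (C + 1) / (2 * A)) ^ 2 * 0) with (-1) in Q by (field; auto). lra.
 - specialize (Q (-A/B)).
   replace (C + 2 * (- A / B) * A + (- A / B) ^ 2 * B) with ((C*B - A^2)/B) in Q by (field; auto).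
   assert (0 <= C * B - A^2). { apply Rmult_le_reg_r with (/B). apply Rinv_0_lt_compat; lra. 
     rewrite Rmult_0_l. exact Q. } nra.
Qed.

Lemma CS_sqrt N u v : dot N u v <= sqrt (dot N u u) * sqrt (dot N v v).
Proof. rewrite <- sqrt_mult_alt by apply dot_nonneg.
 apply Rle_trans with (Rabs (dot N u v)). apply Rle_abs.
 rewrite <- sqrt_Rsqr_abs. apply sqrt_le_1_alt. unfold Rsqr. pose proof (CS N u v). simpl in H. lra. Qed.

Lemma vec_sum n m g : (0 < n)%nat ->
  rsum (m * n) (fun k => g (k mod n)%nat (k / n)%nat) = rsum m (fun j => rsum n (fun i => g i j)).
Proof. intros Hn. induction m. simpl. auto.
 replace (S m * n)%nat with (m * n + n)%nat by lia. rewrite rsum_split, IHm. simpl. f_equal.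
 apply rsum_ext. intros i Hi. replace (m * n + i)%nat with (i + m * n)%nat by lia.
 rewrite Nat.Div0.mod_add, Nat.div_add by lia. rewrite Nat.mod_small, Nat.div_small by lia. auto. Qed.

Lemma dotV n u v p q : (0 < n)%nat ->
  dot (n * n) (vec n (outer u v)) (vec n (outer p q)) = dot n u p * dot n v q.
Proof. intros Hn. unfold dot, vec, outer.
 rewrite (vec_sum n n (fun i j => u i * v j * (p i * q j))) by auto.
 transitivity (rsum n (fun j => rsum n (fun i => u i * p i) * (v j * q j))).
 apply rsum_ext. intros j _.
 rewrite Rmult_comm, <- rsum_scal. apply rsum_ext. intros; ring.
 rewrite rsum_scal; auto.
 Qed.

Lemma rsum0 N : rsum N (fun _ => 0 * 0) = 0.
Proof. induction N; simpl; auto. rewrite IHN. ring. Qed.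

Lemma div_le a b c d : 0 < c -> 0 < d -> a <= b * c -> a / (d * c) <= b / d.
Proof. intros. unfold Rdiv. rewrite Rinv_mult.
 assert (0 < /c) by (apply Rinv_0_lt_compat; auto). assert (0 < /d) by (apply Rinv_0_lt_compat; auto).
 assert (a * /c <= b). { apply Rle_trans with (b * c * /c). nra. rewrite Rmult_assoc, Rinv_r by lra. lra. }
 nra. Qed.

Theorem mainTheorem6 (n : nat) (x z : nat -> R)
  (hx : ~ vzero n x) (hz : ~ vzero n z)
  (hxz : exists i j, (i < n)%nat /\ (j < n)%nat /\ outer x x i j <> outer z z i j) :
  (exists m, is_max (fun y => ~ vzero (n * n) (Xop n x y)) (ratio n x z) m) /\
  (forall theta : R, 0 <= theta <= PI / 2 ->
     is_max (fun y => ~ vzero (n * n) (Xop n x y)) (ratio n x z) (cos theta) ->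
     sin theta = (norm n z * sin (phi n x z)) ^ 2 / norm (n * n) (evec n x z) /\
     (norm n z * sin (phi n x z)) ^ 2 / norm (n * n) (evec n x z)
       = sin (phi n x z) ^ 2 /
         sqrt ((rho n x z ^ 2 - 1) ^ 2 + 2 * rho n x z ^ 2 * sin (phi n x z) ^ 2)).
Proof.
  assert (Hn : (0 < n)%nat). { destruct n. exfalso; apply hx; intros i Hi; inversion Hi. lia. }
  set (N := (n * n)%nat).
  set (xx := dot n x x). set (zz := dot n z z). set (xz := dot n x z).
  assert (Hxx : 0 < xx) by (apply dot_pos; auto).
  assert (Hzz : 0 < zz) by (apply dot_pos; auto).
  set (a := xz / xx).
  set (w := fun i => z i - a * x i).
  set (c := (1 - a ^ 2) / 2).
  set (ys := fun i => c * x i - a * w i).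
  set (E := evec n x z).
  set (E2 := dot N E E).
  set (Y := Xop n x ys).
  set (S := dot N Y Y).
  set (ww := dot n w w).
  assert (Xeq : forall y, Xop n x y = fun k => vec n (outer x y) k + vec n (outer y x) k) by reflexivity.
  assert (Eeq : E = fun k => vec n (outer x x) k - vec n (outer z z) k) by reflexivity.
  assert (Edec : forall k, E k = Y k - vec n (outer w w) k).
  { intro k. unfold E, Y, evec, Xop, vec, outer, ys, w, c, a. field. lra. }
  assert (wx : dot n w x = 0).
  { unfold w. replace (fun i => z i - a * x i) with (fun i => 1 * z i + (- a) * x i)
      by (apply functional_extensionality; intros; ring).
    rewrite dot_lin_l. rewrite (dot_sym n z x). fold xx xz. unfold a. field. lra. }
  assert (cross : forall y, dot N (vec n (outer w w)) (Xop n x y) = 0).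
  { intro y. rewrite Xeq, dot_add_r. unfold N. rewrite !dotV by auto. rewrite (dot_sym n w y) in *.
    rewrite wx. ring. }
  assert (F3 : forall y, dot N E (Xop n x y) = dot N Y (Xop n x y)).
  { intro y. rewrite (dot_ext N E (fun k => Y k - vec n (outer w w) k) _ (Xop n x y)) by auto.
    rewrite dot_sub_l, cross. ring. }
  assert (F4 : E2 = S + ww ^ 2).
  { unfold E2. rewrite (dot_ext N E (fun k => Y k - vec n (outer w w) k) E E) by auto.
    rewrite dot_sub_l, (dot_sym N Y E). change (dot N E Y) with (dot N E (Xop n x ys)). rewrite F3. fold Y S.
    rewrite (dot_ext N (vec n (outer w w)) (vec n (outer w w)) E (fun k => Y k - vec n (outer w w) k)) by auto.
    rewrite dot_sub_r. unfold Y. rewrite cross. unfold N. rewrite dotV by auto.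
    fold ww. ring. }
  assert (F5 : ww = zz - xz ^ 2 / xx).
  { unfold ww. replace (dot n w w) with (dot n w z).
    unfold w. replace (fun i => z i - a * x i) with (fun i => 1 * z i + (- a) * x i)
      by (apply functional_extensionality; intros; ring).
    rewrite dot_lin_l. fold zz. fold xz. unfold a. field. lra.
    unfold w at 3. replace (fun i => z i - a * x i) with (fun i => 1 * z i + (- a) * x i)
      by (apply functional_extensionality; intros; ring).
    symmetry. rewrite dot_sym, dot_lin_l, (dot_sym n x w), wx, (dot_sym n z w). ring. }
  assert (F6 : E2 = xx ^ 2 - 2 * xz ^ 2 + zz ^ 2).
  { unfold E2. rewrite Eeq, dot_sub_l, !dot_sub_r. unfold N. rewrite !dotV by auto.
    rewrite (dot_sym n z x). fold xx zz xz. ring. }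
  assert (F7 : xz ^ 2 <= xx * zz) by apply CS.
  assert (HE2 : 0 < E2).
  { apply dot_pos. destruct hxz as [i [j [Hi [Hj Hij]]]]. intro H.
    apply Hij. specialize (H (i + j * n)%nat).
    unfold E, evec, vec in H. rewrite Nat.Div0.mod_add, Nat.div_add, Nat.mod_small, Nat.div_small in H by lia.
    rewrite Nat.add_0_l in H. apply Rminus_diag_uniq. apply H. unfold N. nia. }
  assert (HS : 0 <= S) by apply dot_nonneg.
  set (M := sqrt S / sqrt E2).
  assert (sE : 0 < sqrt E2) by (apply sqrt_lt_R0; auto).
  assert (bound : forall y, ~ vzero N (Xop n x y) -> ratio n x z y <= M).
  { intros y Hy. unfold ratio, M, norm. fold N E. rewrite F3.
    apply div_le; auto. apply sqrt_lt_R0, dot_pos; auto. apply CS_sqrt. }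
  assert (attain : exists y, ~ vzero N (Xop n x y) /\ ratio n x z y = M).
  { destruct (Req_dec S 0) as [S0|S0].
    - exists x. assert (Hq : 0 < dot N (Xop n x x) (Xop n x x)).
      { rewrite Xeq, dot_add_l, !dot_add_r. unfold N. rewrite !dotV by auto. fold xx. nra. }
      split. intro H. assert (dot N (Xop n x x) (Xop n x x) = 0).
      { unfold dot. transitivity (rsum N (fun i => 0 * 0)). apply rsum_ext. intros i Hi. rewrite H by auto. ring.
        apply rsum0. }
      lra.
      unfold ratio, M, norm. fold N E. rewrite F3. fold S. rewrite S0, sqrt_0.
      assert (dot N Y (Xop n x x) = 0).
      { pose proof (CS N Y (Xop n x x)). fold S in H. rewrite S0 in H. nra. }
      rewrite H. unfold Rdiv. ring.
    - exists ys. fold Y. split.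
      + intro H. assert (S = 0). { unfold S. unfold dot.
        transitivity (rsum N (fun i => 0 * 0)). apply rsum_ext. intros i Hi. rewrite H by auto. ring.
        apply rsum0. } lra.
      + unfold ratio, M, norm. fold N E. rewrite F3. fold Y S.
        assert (0 < sqrt S) by (apply sqrt_lt_R0; lra).
        pose proof (sqrt_sqrt S HS). fold E2. rewrite <- H0 at 1. field. split; lra. }
  split.
  { exists M. split; auto. }
  intros theta Hth [[y0 [Hy0 Hy0']] Hmax].
  destruct attain as [y1 [Hy1 Hy1']].
  assert (CM : cos theta = M).
  { apply Rle_antisym. rewrite <- Hy0'. apply bound; auto. rewrite <- Hy1'. apply Hmax; auto. }
  set (cc := xz / (sqrt xx * sqrt zz)).
  assert (sxx := sqrt_sqrt xx (Rlt_le _ _ Hxx)).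
  assert (szz := sqrt_sqrt zz (Rlt_le _ _ Hzz)).
  assert (Pxx : 0 < sqrt xx) by (apply sqrt_lt_R0; auto).
  assert (Pzz : 0 < sqrt zz) by (apply sqrt_lt_R0; auto).
  assert (cc2 : cc ^ 2 = xz ^ 2 / (xx * zz)).
  { unfold cc. assert (Hp : (sqrt xx * sqrt zz) ^ 2 = xx * zz) by (rewrite Rpow_mult_distr; simpl; rewrite !Rmult_1_r, sxx, szz; auto). rewrite <- Hp. field. lra. }
  assert (ccb : cc ^ 2 <= 1).
  { rewrite cc2. apply Rmult_le_reg_r with (xx * zz). nra. field_simplify; nra. }
  assert (Hph : phi n x z = acos cc) by reflexivity.
  assert (sph : sin (phi n x z) = sqrt (1 - cc ^ 2)).
  { rewrite Hph, sin_acos. unfold Rsqr. f_equal. ring. nra. }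
  assert (s2 : sin (phi n x z) ^ 2 = 1 - cc ^ 2).
  { rewrite sph. simpl. rewrite !Rmult_1_r, sqrt_sqrt; nra. }
  assert (Hnz : norm n z = sqrt zz) by reflexivity.
  assert (HnE : norm N E = sqrt E2) by reflexivity.
  assert (K1 : (norm n z * sin (phi n x z)) ^ 2 = ww).
  { rewrite Rpow_mult_distr, s2, Hnz, F5, cc2. replace (sqrt zz ^ 2) with zz by (simpl; rewrite Rmult_1_r; auto). field. lra. }
  assert (Hww : 0 <= ww) by apply dot_nonneg.
  fold N E. rewrite K1, HnE.
  split.
  - assert (0 <= sin theta) by (apply sin_ge_0; pose proof PI_RGT_0; lra).
    assert (sin theta ^ 2 = (ww / sqrt E2) ^ 2).
    { pose proof (sin2_cos2 theta). unfold Rsqr in H0. rewrite CM in H0. unfold M in H0.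
      assert (sS2 : sqrt S ^ 2 = S) by (simpl; rewrite Rmult_1_r; apply sqrt_sqrt; lra).
      assert (sE2 : sqrt E2 ^ 2 = E2) by (simpl; rewrite Rmult_1_r; apply sqrt_sqrt; lra).
      assert (Hs : sin theta ^ 2 = 1 - (sqrt S / sqrt E2) ^ 2) by (simpl; lra).
      rewrite Hs. apply Rmult_eq_reg_r with (sqrt E2 ^ 2); [|apply pow_nonzero; lra].
      replace ((1 - (sqrt S / sqrt E2) ^ 2) * sqrt E2 ^ 2) with (sqrt E2 ^ 2 - sqrt S ^ 2) by (field; lra).
      replace ((ww / sqrt E2) ^ 2 * sqrt E2 ^ 2) with (ww ^ 2) by (field; lra).
      rewrite sS2, sE2. lra. }
    assert (0 <= ww / sqrt E2) by (apply Rmult_le_pos; [lra| left; apply Rinv_0_lt_compat; lra]).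
    nra.
  - set (r := rho n x z).
    assert (r2 : r ^ 2 = xx / zz).
    { unfold r, rho, norm. fold xx zz. transitivity (sqrt xx ^ 2 / sqrt zz ^ 2). field. lra.
      simpl. rewrite !Rmult_1_r, sxx, szz. auto. }
    rewrite r2, s2, cc2.
    assert (KK : E2 = zz ^ 2 * ((xx / zz - 1) ^ 2 + 2 * (xx / zz) * (1 - xz ^ 2 / (xx * zz)))).
    { rewrite F6. field. lra. }
    rewrite KK, sqrt_mult_alt, sqrt_pow2 by nra.
    rewrite F5. set (Kv := (xx / zz - 1) ^ 2 + 2 * (xx / zz) * (1 - xz ^ 2 / (xx * zz))) in *.
    assert (0 < Kv). { assert (0 < zz ^ 2 * Kv) by (rewrite <- KK; lra).
      assert (0 < zz ^ 2) by nra. nra. }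
    assert (0 < sqrt Kv) by (apply sqrt_lt_R0; lra).
    field. split; lra.
Qed.
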